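(* $M_1$ has exactly two irreducible representations, both one-dimensional: the trivial representation, and the representation $L_\xi$ defined by $a\mapsto1+a'$.
   Context: Work in $\operatorname{Ver}_4^+$, the category of $k[d]/d^2$-modules ($\operatorname{char}k=2$, $k$ algebraically closed, $d$ primitive) with braiding $c(v\otimes w)=w\otimes v+dw\otimes dv$, and $a'=da$. $M_1$ is the affine group scheme sending a commutative algebra $A$ to $A$ with group operation $a*b=a+b+a'b$. Its coordinate ring is $k[X,X']$ with $\Delta(X)=X\otimes1+1\otimes X+X'\otimes X$. *)

(* Defs.v *)
From mathcomp Require Import all_boot all_order all_algebra.
Set Implicit Arguments. Unset Strict Implicit. Unset Printing Implicit Defensive.
Import GRing.Theory.
Local Open Scope ring_scope.

(* The coordinate ring O = O(M_1) of M_1, as an object of Ver_4^+.            *)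
(* As a commutative algebra in Ver_4^+ generated by X with d X = X', the      *)
(* commutativity axiom m o c = m forces X'^2 = 0 (c(X(x)X) = X(x)X+X'(x)X'),   *)
(* so O has k-basis X^m, X^m X' (m >= 0).  An element f(X) + g(X) X' is       *)
(* represented by the pair (f, g).                                             *)
Notation O F := ({poly F} * {poly F})%type.
Notation O2 F := ({poly {poly F}} * {poly {poly F}} *
                  ({poly {poly F}} * {poly {poly F}}))%type.

Section M1.
Variable F : fieldType.

(* the action of d on O : d(f + g X') = f'(X) X'  (d derivation, d X' = 0) *)
Definition Od (a : O F) : O F := (0, deriv a.1).

(* counit of O(M_1): X |-> 0, X' |-> 0 (unit of M_1 is a = 0) *)
Definition Oeps (a : O F) : F := a.1.[0].

(* elements of O (x) O.  The underlying vector space is                       *)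
(*   k[X1,X2] (+) k[X1,X2] e1 (+) k[X1,X2] e2 (+) k[X1,X2] e1 e2             *)
(* with X1 = X (x) 1, X2 = 1 (x) X, e1 = X' (x) 1, e2 = 1 (x) X'.           *)
(* A bivariate polynomial is an element of {poly {poly F}}: the outer        *)
(* variable is X1, the inner one is X2.  The quadruple (c00,c10,c01,c11)      *)
(* stands for c00 + c10 e1 + c01 e2 + c11 e1 e2.                              *)
Definition c00 (t : O2 F) := t.1.1.
Definition c10 (t : O2 F) := t.1.2.
Definition c01 (t : O2 F) := t.2.1.
Definition c11 (t : O2 F) := t.2.2.
Definition mkO2 (a b c e : {poly {poly F}}) : O2 F := ((a, b), (c, e)).

Definition inX1 (p : {poly F}) : {poly {poly F}} := map_poly polyC p.
Definition inX2 (p : {poly F}) : {poly {poly F}} := p%:P.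

Definition tens (a b : O F) : O2 F :=
  mkO2 (inX1 a.1 * inX2 b.1) (inX1 a.2 * inX2 b.1)
       (inX1 a.1 * inX2 b.2) (inX1 a.2 * inX2 b.2).

(* Left multiplication by Delta(X) = X(x)1 + 1(x)X + X'(x)X in the algebra   *)
(* O (x) O of Ver_4^+, whose product is (m(x)m)(1(x)c(x)1), i.e.              *)
(*   (a(x)b)(g(x)h) = ag(x)bh + a dg (x) db h.                                *)
(* One computes  Delta(X) * T = (X1 + X2 + e1 X2) T + e1 e2 (d/dX1) T.        *)
Definition mulDX (t : O2 F) : O2 F :=
  let X1 : {poly {poly F}} := 'X in
  let X2 : {poly {poly F}} := ('X)%:P in
  mkO2 ((X1 + X2) * c00 t)
       ((X1 + X2) * c10 t + X2 * c00 t)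
       ((X1 + X2) * c01 t)
       ((X1 + X2) * c11 t + X2 * c01 t + deriv (c00 t)).

Definition O2one : O2 F := mkO2 1 0 0 0.

(* Delta(X^m) = Delta(X)^m *)
Definition DeltaXn (m : nat) : O2 F := iter m mulDX O2one.

(* right multiplication by Delta(X') = e1 + e2 + e1 e2 (= d Delta(X)) ;      *)
(* since d kills every left tensor factor of Delta(X'), this product is the    *)
(* naive one.                                                                 *)
Definition mulDX' (t : O2 F) : O2 F :=
  mkO2 0 (c00 t) (c00 t) (c00 t + c10 t + c01 t).

(* the comultiplication Delta : O -> O (x) O, k-linear, with *)
(* Delta(X^m) = Delta(X)^m and Delta(X^m X') = Delta(X)^m Delta(X').          *)
Definition Delta (a : O F) : O2 F :=
  \sum_(m < size a.1) (a.1`_m)%:P *: DeltaXn m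
  + mulDX' (\sum_(m < size a.2) (a.2`_m)%:P *: DeltaXn m).

(* Finite-dimensional representations of M_1 = O(M_1)-comodules in Ver_4^+.  *)
(* V = F^n with basis e_0..e_(n-1) (column vectors), d acts on V by the       *)
(* matrix D (D e_j = sum_i D i j e_i, D^2 = 0), and the coaction is           *)
(*   rho(e_j) = sum_i e_i (x) T i j,   T i j in O.                            *)
Record rep := Rep {
  rdim : nat;
  rd : 'M[F]_rdim;
  rcoef : 'I_rdim -> 'I_rdim -> O F }.
Arguments rd : clear implicits.
Arguments rcoef : clear implicits.

Definition is_rep (R : rep) : Prop :=
  [/\ rd R *m rd R = 0,
      (* coassociativity: (1 (x) Delta) rho = (rho (x) 1) rho *)
      (forall i j, Delta (rcoef R i j) = \sum_k tens (rcoef R i k) (rcoef R k j)),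
      (* counit: (1 (x) eps) rho = id *)
      (forall i j, Oeps (rcoef R i j) = (i == j)%:R) &
      (* rho is a morphism in Ver_4^+: rho o d = (d (x) 1 + 1 (x) d) o rho *)
      (forall i j, \sum_k rd R k j *: rcoef R i k
                   = \sum_k rd R i k *: rcoef R k j + Od (rcoef R i j))].

(* For v in V, the O-valued coordinates of rho(v) : coordinate i is           *)
(* sum_j v_j T i j.  rho(v) lies in W (x) O iff, for every basis element of O *)
(* (X^m if b = false, X^m X' if b = true), the vector of the corresponding   *)
(* coefficients lies in W.                                                    *)
Definition rho_coef (R : rep) (v : 'cV[F]_(rdim R)) (m : nat) (b : bool)
  : 'cV[F]_(rdim R) :=
  \col_i (let a := \sum_j v j 0 *: rcoef R i j in
          (if b then a.2 else a.1)`_m).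

Arguments rho_coef : clear implicits.

(* subrepresentations: subobjects in Ver_4^+ (d-stable subspaces) that are   *)
(* subcomodules                                                               *)
Definition subrep (R : rep) (W : {vspace 'cV[F]_(rdim R)}) : Prop :=
  (forall v, v \in W -> rd R *m v \in W) /\
  (forall v, v \in W -> forall m b, rho_coef R v m b \in W).

Arguments subrep : clear implicits.

Definition irreducible (R : rep) : Prop :=
  [/\ is_rep R, (0 < rdim R)%N &
      forall W, subrep R W -> W = 0%VS \/ W = fullv].

Definition rep_iso (R1 R2 : rep) : Prop :=
  exists (P : 'M[F]_(rdim R2, rdim R1)) (Q : 'M[F]_(rdim R1, rdim R2)),
    [/\ P *m Q = 1%:M, Q *m P = 1%:M,
        P *m rd R1 = rd R2 *m P &
        forall i j, \sum_k P i k *: rcoef R1 k j = \sum_k P k j *: rcoef R2 i k].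

(* the trivial representation: rho(v) = v (x) 1 *)
Definition triv_rep : rep := @Rep 1 0 (fun _ _ => (1, 0)).

(* L_xi : a |-> 1 + a', i.e. rho(v) = v (x) (1 + X') *)
Definition Lxi_rep : rep := @Rep 1 0 (fun _ _ => (1, 1)).

End M1.

(* Main.v *)
Require Import Defs.
From mathcomp Require Import all_boot all_order all_algebra.
From mathcomp Require Import ring.
Import GRing.Theory.
Local Open Scope ring_scope.
Section S.
Variable F : fieldType.
Implicit Types P : {poly {poly F}}.

Definition S2 : {poly {poly F}} := 'X + ('X)%:P.
Lemma coefS P b M :
  ((S2 * P)`_b)`_M =
  (if b == 0%N then 0 else P`_b.-1`_M) + (if M == 0%N then 0 else P`_b`_M.-1).
Proof.
rewrite /S2 mulrDl coefD coefXM coefCM coefD coefXM.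
by case: (b == 0%N); rewrite ?coef0.
Qed.
Definition X2 : {poly {poly F}} := ('X)%:P.

Lemma DX_succ m : DeltaXn F m.+1 = mulDX (DeltaXn F m).
Proof. by rewrite /DeltaXn iterS. Qed.

Lemma mulDX_c00 t : c00 (mulDX t) = S2 * c00 t. Proof. by []. Qed.
Lemma mulDX_c10 t : c10 (mulDX t) = S2 * c10 t + X2 * c00 t. Proof. by []. Qed.
Lemma mulDX_c01 t : c01 (mulDX t) = S2 * c01 t. Proof. by []. Qed.

Lemma c01_DX m : c01 (DeltaXn F m) = 0.
Proof. elim: m => [//|m IH]; by rewrite DX_succ mulDX_c01 IH mulr0. Qed.

Lemma c00_DX m : c00 (DeltaXn F m) = S2 ^+ m.
Proof. elim: m => [//|m IH]; by rewrite DX_succ mulDX_c00 IH exprS. Qed.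

Lemma hom_S m b M : (b + M != m)%N -> ((S2 ^+ m)`_b)`_M = 0.
Proof.
elim: m b M => [|m IH] b M.
  rewrite expr0 coefC; case: b => [|b] //=; rewrite coefC; case: M => //.
move=> H; rewrite exprS (coefS (S2 ^+ m)).
case: b H => [|b] H /=; rewrite ?add0r.
  case: M H => [|M] H //=; apply: IH; by rewrite add0n in H *.
rewrite IH; last by rewrite addSn eqSS in H.
case: M H => [|M] H; rewrite ?addr0 //= add0r IH //.
by rewrite addnS eqSS in H.
Qed.

Lemma S_m0 m : ((S2 ^+ m)`_m)`_0 = 1.
Proof.
elim: m => [|m IH]; first by rewrite expr0 !coefC.
by rewrite exprS (coefS (S2 ^+ m)) /= addr0.
Qed.

Lemma S_0m m : ((S2 ^+ m)`_0)`_m = 1.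
Proof.
elim: m => [|m IH]; first by rewrite expr0 !coefC.
by rewrite exprS (coefS (S2 ^+ m)) /= add0r.
Qed.

Lemma c10_DX00 m : ((c10 (DeltaXn F m))`_0)`_0 = 0.
Proof.
case: m => [|m]; first by rewrite /= coef0 coef0.
rewrite DX_succ mulDX_c10 coefD coefD (coefS (c10 (DeltaXn F m))) /= add0r /X2 coefCM coefXM /=; exact: add0r.
Qed.

Lemma c00_sum I r (P : pred I) (G : I -> O2 F) :
  c00 (\sum_(i <- r | P i) G i) = \sum_(i <- r | P i) c00 (G i).
Proof. by apply: (big_morph (@c00 F)). Qed.
Lemma c10_sum I r (P : pred I) (G : I -> O2 F) :
  c10 (\sum_(i <- r | P i) G i) = \sum_(i <- r | P i) c10 (G i).
Proof. by apply: (big_morph (@c10 F)). Qed.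
Lemma c01_sum I r (P : pred I) (G : I -> O2 F) :
  c01 (\sum_(i <- r | P i) G i) = \sum_(i <- r | P i) c01 (G i).
Proof. by apply: (big_morph (@c01 F)). Qed.
Lemma c11_sum I r (P : pred I) (G : I -> O2 F) :
  c11 (\sum_(i <- r | P i) G i) = \sum_(i <- r | P i) c11 (G i).
Proof. by apply: (big_morph (@c11 F)). Qed.

Lemma coef2_sum s (p : {poly F}) (Q : nat -> {poly {poly F}}) b M :
  ((\sum_(m < s) (p`_m)%:P *: Q m)`_b)`_M = \sum_(m < s) p`_m * ((Q m)`_b)`_M.
Proof.
rewrite coef_sum coef_sum; apply: eq_bigr => m _.
by rewrite coefZ coefCM.
Qed.

Definition DS (p : {poly F}) := \sum_(m < size p) (p`_m)%:P *: DeltaXn F m.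

Lemma DeltaE a : Delta a = DS a.1 + mulDX' (DS a.2).
Proof. by []. Qed.

Lemma c00D (x y : O2 F) : (@c00 F) (x + y) = (@c00 F) x + (@c00 F) y. Proof. by []. Qed.
Lemma c10D (x y : O2 F) : (@c10 F) (x + y) = (@c10 F) x + (@c10 F) y. Proof. by []. Qed.
Lemma c01D (x y : O2 F) : (@c01 F) (x + y) = (@c01 F) x + (@c01 F) y. Proof. by []. Qed.
Lemma c11D (x y : O2 F) : (@c11 F) (x + y) = (@c11 F) x + (@c11 F) y. Proof. by []. Qed.
Lemma c00Z c (x : O2 F) : (@c00 F) (c *: x) = c *: (@c00 F) x. Proof. by []. Qed.
Lemma c10Z c (x : O2 F) : (@c10 F) (c *: x) = c *: (@c10 F) x. Proof. by []. Qed.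
Lemma c01Z c (x : O2 F) : (@c01 F) (c *: x) = c *: (@c01 F) x. Proof. by []. Qed.
Lemma c11Z c (x : O2 F) : (@c11 F) (c *: x) = c *: (@c11 F) x. Proof. by []. Qed.
Lemma c00' t : (@c00 F) (mulDX' t) = 0. Proof. by []. Qed.
Lemma c10' t : (@c10 F) (mulDX' t) = (@c00 F) t. Proof. by []. Qed.
Lemma c01' t : (@c01 F) (mulDX' t) = (@c00 F) t. Proof. by []. Qed.
Lemma c11' t : (@c11 F) (mulDX' t) = (@c00 F) t + (@c10 F) t + (@c01 F) t. Proof. by []. Qed.

Lemma Delta_c00 a b M :
  ((c00 (Delta a))`_b)`_M = \sum_(m < size a.1) a.1`_m * ((S2 ^+ m)`_b)`_M.
Proof.
rewrite DeltaE c00D c00' addr0 /DS c00_sum.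
under eq_bigr do rewrite c00Z c00_DX.
exact: coef2_sum.
Qed.

Lemma DS_c00 p : @c00 F (DS p) = \sum_(m < size p) (p`_m)%:P *: S2 ^+ m.
Proof. rewrite /DS c00_sum; apply: eq_bigr => m _; by rewrite c00Z c00_DX. Qed.
Lemma DS_c01 p : @c01 F (DS p) = 0.
Proof. rewrite /DS c01_sum big1 // => m _; by rewrite c01Z c01_DX scaler0. Qed.
Lemma DS_c10 p : @c10 F (DS p) = \sum_(m < size p) (p`_m)%:P *: @c10 F (DeltaXn F m).
Proof. rewrite /DS c10_sum; apply: eq_bigr => m _; by rewrite c10Z. Qed.
Lemma DS_c11 p : @c11 F (DS p) = \sum_(m < size p) (p`_m)%:P *: @c11 F (DeltaXn F m).
Proof. rewrite /DS c11_sum; apply: eq_bigr => m _; by rewrite c11Z. Qed.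

Lemma Delta_c01 a b M :
  ((@c01 F (Delta a))`_b)`_M = \sum_(m < size a.2) a.2`_m * ((S2 ^+ m)`_b)`_M.
Proof.
rewrite DeltaE c01D c01' DS_c01 DS_c00 add0r; exact: coef2_sum.
Qed.

Lemma Delta_c10 a b M :
  ((@c10 F (Delta a))`_b)`_M =
  \sum_(m < size a.1) a.1`_m * ((@c10 F (DeltaXn F m))`_b)`_M
  + \sum_(m < size a.2) a.2`_m * ((S2 ^+ m)`_b)`_M.
Proof.
by rewrite DeltaE c10D c10' DS_c00 DS_c10 coefD coefD !coef2_sum (coef2_sum _ _ (fun m => @c10 F (DeltaXn F m))).
Qed.

Lemma Delta_c11 a b M :
  ((@c11 F (Delta a))`_b)`_M =
  \sum_(m < size a.1) a.1`_m * ((@c11 F (DeltaXn F m))`_b)`_M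
  + \sum_(m < size a.2) a.2`_m * ((S2 ^+ m + @c10 F (DeltaXn F m))`_b)`_M.
Proof.
rewrite DeltaE c11D c11' DS_c00 DS_c10 DS_c01 DS_c11 addr0 -big_split /=.
under [X in _ + X]eq_bigr do rewrite -scalerDr.
by rewrite coefD coefD (coef2_sum _ _ (fun m => @c11 F (DeltaXn F m))) (coef2_sum _ _ (fun m => S2 ^+ m + @c10 F (DeltaXn F m))).
Qed.

Lemma tens_c00 a c i j : ((@c00 F (tens a c))`_i)`_j = a.1`_i * c.1`_j.
Proof. by rewrite /tens /c00 /= /inX1 /inX2 coefMC coef_map /= coefCM. Qed.
Lemma tens_c10 a c i j : ((@c10 F (tens a c))`_i)`_j = a.2`_i * c.1`_j.
Proof. by rewrite /tens /c10 /= /inX1 /inX2 coefMC coef_map /= coefCM. Qed.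
Lemma tens_c01 a c i j : ((@c01 F (tens a c))`_i)`_j = a.1`_i * c.2`_j.
Proof. by rewrite /tens /c01 /= /inX1 /inX2 coefMC coef_map /= coefCM. Qed.
Lemma tens_c11 a c i j : ((@c11 F (tens a c))`_i)`_j = a.2`_i * c.2`_j.
Proof. by rewrite /tens /c11 /= /inX1 /inX2 coefMC coef_map /= coefCM. Qed.
End S.

Lemma sum_delta (F : fieldType) (p : {poly F}) (c : nat -> F) M :
  (forall m, m != M -> c m = 0) -> c M = 1 ->
  \sum_(m < size p) p`_m * c m = p`_M.
Proof.
move=> h0 h1; case: (ltnP M (size p)) => hM.
  rewrite (bigD1 (Ordinal hM)) //= h1 mulr1 big1 ?addr0 // => m hm.
  rewrite h0 ?mulr0 //; apply: contraNneq hm => e; apply/eqP/val_inj; exact: e.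
rewrite nth_default // big1 // => m _.
rewrite h0 ?mulr0 //; apply/eqP => e.
by have := ltn_ord m; rewrite e ltnNge hM.
Qed.

Lemma sum_widen (F : fieldType) (p : {poly F}) (c : nat -> F) N :
  (size p <= N)%N ->
  \sum_(m < size p) p`_m * c m = \sum_(m < N) p`_m * c m.
Proof.
move=> hN; rewrite (big_ord_widen N (fun m => p`_m * c m) hN) big_mkcond /=.
apply: eq_bigr => m _; case: ifP => // /negbT; rewrite -leqNgt => h.
by rewrite nth_default ?mul0r.
Qed.

Lemma pairE (F : fieldType) (x y : O F) : x.1 = y.1 -> x.2 = y.2 -> x = y.
Proof. by case: x; case: y => /= ? ? ? ? -> ->. Qed.

Lemma fst_sum (F : fieldType) I r (P : pred I) (G : I -> O F) :
  (\sum_(i <- r | P i) G i).1 = \sum_(i <- r | P i) (G i).1.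
Proof. by apply: (big_morph fst). Qed.
Lemma snd_sum (F : fieldType) I r (P : pred I) (G : I -> O F) :
  (\sum_(i <- r | P i) G i).2 = \sum_(i <- r | P i) (G i).2.
Proof. by apply: (big_morph snd). Qed.

Section Rep.
Variable F : fieldType.
Variable n : nat.
Variable D : 'M[F]_n.
Variable T : 'I_n -> 'I_n -> O F.
Hypothesis HD : D *m D = 0.
Hypothesis HC : forall i j, Delta (T i j) = \sum_k tens (T i k) (T k j).
Hypothesis HE : forall i j, Oeps (T i j) = (i == j)%:R.
Hypothesis HM : forall i j, \sum_k D k j *: T i k
                   = \sum_k D i k *: T k j + Od (T i j).

Local Notation f i j := (T i j).1.
Local Notation g i j := (T i j).2.

Lemma f0 i j : (f i j)`_0 = (i == j)%:R.
Proof. by rewrite -horner_coef0; have := HE i j. Qed.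

Lemma E00 i j b M :
  \sum_(m < size (f i j)) (f i j)`_m * ((S2 F ^+ m)`_b)`_M
  = \sum_k (f i k)`_b * (f k j)`_M.
Proof.
rewrite -Delta_c00 HC c00_sum coef_sum coef_sum; apply: eq_bigr => k _.
by rewrite tens_c00.
Qed.

Lemma E01 i j b M :
  \sum_(m < size (g i j)) (g i j)`_m * ((S2 F ^+ m)`_b)`_M
  = \sum_k (f i k)`_b * (g k j)`_M.
Proof.
rewrite -Delta_c01 HC c01_sum coef_sum coef_sum; apply: eq_bigr => k _.
by rewrite tens_c01.
Qed.

Lemma E10 i j b M :
  \sum_(m < size (f i j)) (f i j)`_m * ((@c10 F (DeltaXn F m))`_b)`_M
  + \sum_(m < size (g i j)) (g i j)`_m * ((S2 F ^+ m)`_b)`_M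
  = \sum_k (g i k)`_b * (f k j)`_M.
Proof.
rewrite -Delta_c10 HC c10_sum coef_sum coef_sum; apply: eq_bigr => k _.
by rewrite tens_c10.
Qed.

Lemma E11 i j b M :
  \sum_(m < size (f i j)) (f i j)`_m * ((@c11 F (DeltaXn F m))`_b)`_M
  + \sum_(m < size (g i j)) (g i j)`_m * ((S2 F ^+ m + @c10 F (DeltaXn F m))`_b)`_M
  = \sum_k (g i k)`_b * (g k j)`_M.
Proof.
rewrite -Delta_c11 HC c11_sum coef_sum coef_sum; apply: eq_bigr => k _.
by rewrite tens_c11.
Qed.


Definition Nb := \max_(i : 'I_n) \max_(j : 'I_n) size (f i j).

Lemma size_Nb i j : (size (f i j) <= Nb.+1)%N.
Proof.
apply: leq_trans (leqnSn _).
apply: leq_trans (@leq_bigmax _ (fun j => size (f i j)) j) _.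
exact: (@leq_bigmax _ (fun i => \max_(j : 'I_n) size (f i j)) i).
Qed.

Definition inU (w : 'cV[F]_n) :=
  forall b, (0 < b)%N -> forall i, \sum_j (f i j)`_b * w j 0 = 0.

Lemma KL w (hw : inU w) (c : nat -> F) i :
  \sum_j w j 0 * \sum_(m < size (f i j)) (f i j)`_m * c m = c 0%N * w i 0.
Proof.
under eq_bigr do rewrite (sum_widen _ _ _ _ (size_Nb i _)) mulr_sumr.
rewrite exchange_big big_ord_recl /=.
rewrite [X in _ + X]big1 ?addr0.
  rewrite (bigD1 i) //= f0 eqxx mul1r big1 ?addr0; first by rewrite mulrC.
  move=> j hj.
  by rewrite f0 eq_sym (negbTE hj) mul0r mulr0.
move=> m _.
transitivity (c (bump 0 m) * \sum_j (f i j)`_(bump 0 m) * w j 0).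
  rewrite mulr_sumr; apply: eq_bigr => j _; ring.
by rewrite (hw (bump 0 m) isT i) mulr0.
Qed.

Definition B0 (w : 'cV[F]_n) : 'cV[F]_n := \col_i \sum_j (g i j)`_0 * w j 0.

Lemma swap_sum (a : 'I_n -> 'I_n -> F) (w : 'I_n -> F) :
  \sum_j w j * \sum_k a k j = \sum_k \sum_j a k j * w j.
Proof.
under eq_bigr do rewrite mulr_sumr.
rewrite exchange_big; apply: eq_bigr => k _; apply: eq_bigr => j _.
by rewrite mulrC.
Qed.

Lemma gU w (hw : inU w) M (hM : (0 < M)%N) i :
  \sum_j (g i j)`_M * w j 0 = 0.
Proof.
have key : \sum_j w j 0 *
   \sum_(m < size (f i j)) (f i j)`_m * ((@c10 F (DeltaXn F m))`_0)`_M
    + \sum_j w j 0 * (g i j)`_M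
  = \sum_j w j 0 * \sum_k (g i k)`_0 * (f k j)`_M.
  rewrite -big_split; apply: eq_bigr => j _ /=; rewrite -E10 mulrDr; congr (_ + _); congr (_ * _).
  rewrite (sum_delta _ _ (fun m => ((S2 F ^+ m)`_0)`_M) M) //.
    by move=> m hm; apply: hom_S; rewrite add0n eq_sym.
  exact: S_0m.
rewrite (@KL w hw (fun m => ((@c10 F (DeltaXn F m))`_0)`_M) i) /= !coef0 mul0r add0r in key.
rewrite (eq_bigr (fun j => w j 0 * (g i j)`_M)); last by move=> j _; rewrite mulrC.
rewrite key.
under eq_bigr do rewrite mulr_sumr.
rewrite exchange_big big1 // => k _.
transitivity ((g i k)`_0 * \sum_j (f k j)`_M * w j 0).
  rewrite mulr_sumr; apply: eq_bigr => j _; ring.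
by rewrite hw // mulr0.
Qed.

Lemma B0U w (hw : inU w) : inU (B0 w).
Proof.
move=> b hb i.
transitivity (\sum_j (\sum_k (f i k)`_b * (g k j)`_0) * w j 0).
  under eq_bigr do rewrite mxE mulr_sumr.
  rewrite exchange_big; apply: eq_bigr => j _; rewrite mulr_suml.
  by apply: eq_bigr => k _; rewrite mulrA.
apply: (etrans _ (@gU w hw b hb i)); apply: eq_bigr => j _; rewrite -E01.
rewrite (sum_delta _ _ (fun m => ((S2 F ^+ m)`_b)`_0) b) //.
  by move=> m hm; apply: hom_S; rewrite addn0 eq_sym.
exact: S_m0.
Qed.

Lemma B0idem w (hw : inU w) : B0 (B0 w) = B0 w.
Proof.
apply/matrixP => i z; rewrite (ord1 z) !mxE.
have key : \sum_j w j 0 *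
   \sum_(m < size (f i j)) (f i j)`_m * ((@c11 F (DeltaXn F m))`_0)`_0
    + \sum_j w j 0 * (g i j)`_0
  = \sum_j w j 0 * \sum_k (g i k)`_0 * (g k j)`_0.
  rewrite -big_split; apply: eq_bigr => j _ /=; rewrite -E11 mulrDr; congr (_ + _); congr (_ * _).
  rewrite (sum_delta _ _ (fun m => ((S2 F ^+ m + @c10 F (DeltaXn F m))`_0)`_0) 0) //.
    move=> m hm; rewrite coefD coefD c10_DX00 hom_S; first exact: add0r.
    by rewrite addn0 eq_sym.
  by rewrite coefD coefD c10_DX00 /= !coefC /=; exact: addr0.
rewrite (@KL w hw (fun m => ((@c11 F (DeltaXn F m))`_0)`_0) i) /= !coef0 mul0r add0r in key.
rewrite [RHS](eq_bigr (fun j => w j 0 * (g i j)`_0)); last by move=> j _; rewrite mulrC.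
rewrite key.
under eq_bigr do rewrite mulr_sumr.
rewrite exchange_big; apply: eq_bigr => k _; rewrite !mxE mulr_sumr.
by apply: eq_bigr => j _; ring.
Qed.

Lemma U_nonzero (hn : (0 < n)%N) : exists2 w, inU w & w != 0.
Proof.
pose P m := [exists i, exists j, (f i j)`_m != 0].
have exP : exists m, P m.
  exists 0%N; apply/existsP; exists (Ordinal hn); apply/existsP.
  by exists (Ordinal hn); rewrite f0 eqxx oner_neq0.
have ubP : forall m, P m -> (m <= Nb)%N.
  move=> m /existsP [i /existsP [j hij]].
  rewrite -ltnS; apply: leq_trans (size_Nb i j).
  by apply: contraNT hij; rewrite -leqNgt => h; rewrite nth_default.
case: (ex_maxnP exP ubP) => Mx PMx maxMx.
case/existsP: PMx => i0 /existsP [j0 h0].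
exists (\col_k (f k j0)`_Mx).
  move=> b hb i.
  under eq_bigr do rewrite mxE.
  rewrite -E00 big1 // => m _.
  case: (eqVneq (b + Mx)%N m) => [e|ne]; last by rewrite hom_S // mulr0.
  suff -> : (f i j0)`_m = 0 by rewrite mul0r.
  apply/eqP; apply: contraT => hm.
  have : (m <= Mx)%N by apply: maxMx; apply/existsP; exists i; apply/existsP; exists j0.
  by rewrite -e -{2}(add0n Mx) leq_add2r leqNgt hb.
apply/negP => /eqP h.
have := congr1 (fun A : 'cV[F]_n => A i0 0) h; rewrite !mxE => h1.
by rewrite h1 eqxx in h0.
Qed.

Definition inv (w : 'cV[F]_n) (c : O F) :=
  forall i, \sum_j w j 0 *: T i j = w i 0 *: c.

Lemma inv_of_U w (hw : inU w) (c : F) (hc : forall i, (B0 w) i 0 = c * w i 0) :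
  inv w (1, c%:P).
Proof.
move=> i; apply: pairE.
  rewrite fst_sum /=; apply/polyP => m.
  rewrite coef_sum coefZ coef1.
  under eq_bigr do rewrite coefZ.
  case: m => [|m] /=.
    rewrite (bigD1 i) //= f0 eqxx big1 ?addr0 //.
    by move=> j hj; rewrite f0 eq_sym (negbTE hj) mulr0.
  rewrite mulr0; apply: (etrans _ (hw m.+1 isT i)); apply: eq_bigr => j _; exact: mulrC.
rewrite snd_sum /=; apply/polyP => m.
rewrite coef_sum coefZ coefC.
under eq_bigr do rewrite coefZ.
case: m => [|m] /=.
  rewrite mulrC -hc mxE; apply: eq_bigr => j _; exact: mulrC.
rewrite mulr0; apply: (etrans _ (@gU w hw m.+1 isT i)); apply: eq_bigr => j _; exact: mulrC.
Qed.

Lemma inv_D w c (hw : inv w c) (hc1 : c.1 = 1) : inv (D *m w) c.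
Proof.
have hOd : forall i, \sum_j w j 0 *: Od (T i j) = 0.
  move=> i; apply: pairE.
    by rewrite fst_sum big1 // => j _ /=; rewrite scaler0.
  rewrite snd_sum /=.
  transitivity (deriv (\sum_j w j 0 *: f i j)).
    by rewrite linear_sum; apply: eq_bigr => j _; rewrite linearZ.
  rewrite (_ : \sum_j w j 0 *: f i j = (\sum_j w j 0 *: T i j).1); last by rewrite fst_sum.
  by rewrite hw /= hc1 linearZ /= -polyC1 derivC scaler0.
move=> i.
transitivity (\sum_j w j 0 *: \sum_k D k j *: T i k).
  under eq_bigr do rewrite mxE scaler_suml.
  rewrite exchange_big; apply: eq_bigr => j _; rewrite scaler_sumr.
  by apply: eq_bigr => k _; rewrite scalerA mulrC.
under eq_bigr do rewrite HM scalerDr.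
rewrite big_split /= hOd addr0.
transitivity (\sum_k D i k *: \sum_j w j 0 *: T k j).
  under eq_bigr do rewrite scaler_sumr.
  rewrite exchange_big; apply: eq_bigr => k _; rewrite scaler_sumr.
  by apply: eq_bigr => j _; rewrite !scalerA mulrC.
under eq_bigr do rewrite hw scalerA.
by rewrite mxE scaler_suml.
Qed.

Lemma exists_inv (hn : (0 < n)%N) :
  exists c : O F, (c = (1, 0) \/ c = (1, 1)) /\
    exists2 w : 'cV[F]_n, inv w c & (w != 0 /\ D *m w = 0).
Proof.
case: (U_nonzero hn) => w0 hw0 nz0.
have [c [hc [w hw nz]]] : exists c : O F, (c = (1,0) \/ c = (1,1)) /\
    exists2 w, inv w c & w != 0.
  case: (eqVneq (B0 w0) 0) => hB.
    exists (1, 0); split; first by left.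
    exists w0 => //.
    have := @inv_of_U w0 hw0 0; rewrite polyC0; apply => i.
    by rewrite hB mxE mul0r.
  exists (1, 1); split; first by right.
  exists (B0 w0) => //.
  have := @inv_of_U (B0 w0) (@B0U w0 hw0) 1; rewrite polyC1; apply => i.
  by rewrite (@B0idem w0 hw0) mul1r.
have hc1 : c.1 = 1 by case: hc => ->.
exists c; split => //.
case: (eqVneq (D *m w) 0) => hD; first by exists w.
exists (D *m w); first exact: inv_D.
by split => //; rewrite mulmxA HD mul0mx.
Qed.
End Rep.

Lemma O2E (F : fieldType) (x y : O2 F) :
  c00 x = c00 y -> c10 x = c10 y -> c01 x = c01 y -> c11 x = c11 y -> x = y.
Proof.
move: x y => [[a b] [c d]] [[a' b'] [c' d']].
by rewrite /c00 /c10 /c01 /c11 /= => -> -> -> ->.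
Qed.

Lemma DS1 (F : fieldType) : DS F 1 = O2one F.
Proof. by rewrite /DS size_poly1 big_ord1 coef1 /= polyC1 scale1r. Qed.

Lemma DS0 (F : fieldType) : DS F 0 = 0.
Proof. by rewrite /DS size_poly0 big_ord0. Qed.

Lemma inX1_1 (F : fieldType) : inX1 (1 : {poly F}) = 1.
Proof. by rewrite /inX1 map_polyC /= polyC1. Qed.
Lemma inX1_0 (F : fieldType) : inX1 (0 : {poly F}) = 0.
Proof. by rewrite /inX1 map_polyC /= polyC0. Qed.

Lemma Delta10 (F : fieldType) :
  Delta ((1, 0) : O F) = tens (1, 0) (1, 0).
Proof.
rewrite DeltaE /= DS1 DS0; apply: O2E.
- by rewrite c00D c00' /tens /= inX1_1 /inX2 polyC1 mulr1 addr0.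
- by rewrite c10D c10' /tens /= inX1_0 mul0r; exact: add0r.
- by rewrite c01D c01' /tens /= inX1_1 /inX2 polyC0 mulr0; exact: add0r.
- by rewrite c11D c11' /tens /= inX1_0 mul0r /c00 /c10 /c01 /c11 /= mul0r !addr0.
Qed.

Lemma Delta11 (F : fieldType) :
  Delta ((1, 1) : O F) = tens (1, 1) (1, 1).
Proof.
rewrite DeltaE /= DS1; apply: O2E.
- by rewrite c00D c00' /tens /= inX1_1 /inX2 polyC1 mulr1 addr0.
- by rewrite c10D c10' /tens /= inX1_1 /inX2 polyC1 mulr1 /c10 /c00 /=; exact: add0r.
- by rewrite c01D c01' /tens /= inX1_1 /inX2 polyC1 mulr1 /c01 /c00 /=; exact: add0r.
- by rewrite c11D c11' /tens /= inX1_1 /inX2 polyC1 mulr1 /c00 /c10 /c01 /= !addr0 add0r.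
Qed.

Lemma vs_dim1 (K : fieldType) (m : nat) (hm : m = 1%N) (W : {vspace 'cV[K]_m}) :
  W = 0%VS \/ W = fullv.
Proof.
have hf : \dim (fullv : {vspace 'cV[K]_m}) = 1%N by rewrite dimvf /dimv dim_matrix hm.
have := dimvS (subvf W); rewrite hf.
case: (eqVneq (\dim W) 0%N) => h0 _.
  by left; apply/eqP; rewrite -dimv_eq0 h0.
right; apply/eqP; rewrite eqEdim subvf /= hf.
by rewrite lt0n.
Qed.

Lemma is_rep_const (F : fieldType) (c : O F) :
  Delta c = tens c c -> c.1 = 1 -> c.2`_0 = c.2`_0 ->
  is_rep (@Rep F 1 0 (fun _ _ => c)).
Proof.
move=> hD h1 _; split => /=.
- by rewrite mulmx0.
- by move=> i j; rewrite big_ord1.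
- by move=> i j; rewrite (ord1 i) (ord1 j) /Oeps h1 hornerC eqxx.
- move=> i j; rewrite !big_ord1 !mxE !scale0r add0r /Od h1.
  apply: pairE => //=; by rewrite -polyC1 derivC.
Qed.

Lemma irr_const (F : fieldType) (c : O F) :
  Delta c = tens c c -> c.1 = 1 -> irreducible (@Rep F 1 0 (fun _ _ => c)).
Proof.
move=> hD h1; split => //; first exact: is_rep_const.
by move=> W _; apply: vs_dim1.
Qed.

Lemma not_iso (F : fieldType) : ~ rep_iso (triv_rep F) (Lxi_rep F).
Proof.
move=> [P [Q [hPQ _ _ h]]].
have := congr1 (fun x : O F => x.2`_0) (h 0 0); rewrite !big_ord1 /=.
rewrite !coefZ coefC coef1 /= mulr0 mulr1 => hP.
have := congr1 (fun A : 'M[F]_1 => A 0 0) hPQ; rewrite !mxE big_ord1 -hP mul0r /=.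
by move/eqP; rewrite eq_sym oner_eq0.
Qed.

Lemma classify (F : fieldType) (R : rep F) :
  irreducible R -> rep_iso R (triv_rep F) \/ rep_iso R (Lxi_rep F).
Proof.
case: R => n D T [[HD HC HE HM] /= hn hirr].
have [c [hc [w hw [nz hDw]]]] := @exists_inv F n D T HD HC HE HM hn.
have hsub : @subrep F (Rep D T) <[w]>%VS.
  split => /=.
    by move=> v /vlineP [a ->]; rewrite -scalemxAr hDw scaler0 mem0v.
  move=> v /vlineP [a ->] m b.
  rewrite (_ : @rho_coef F (Rep D T) (a *: w) m b = (a * (if b then c.2 else c.1)`_m) *: w).
    exact/memvZ/memv_line.
  apply/matrixP => i z; rewrite (ord1 z) !mxE.
  have -> : \sum_j (a *: w) j 0 *: T i j = (a * w i 0) *: c.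
    rewrite -scalerA -hw scaler_sumr; apply: eq_bigr => j _.
    by rewrite mxE scalerA.
  by case: b => /=; rewrite coefZ mulrAC.
case: (hirr _ hsub) => hW.
  by have := memv_line w; rewrite hW memv0 (negbTE nz).
have hn1 : n = 1%N.
  have := dim_vline w; rewrite hW nz dimvf /dimv dim_matrix => e.
  have e' : (n * 1)%N = 1%N := e.
  by rewrite muln1 in e'.
subst n.
have w0 : w 0 0 != 0.
  apply: contra nz => /eqP e; apply/eqP/matrixP => i z.
  by rewrite (ord1 i) (ord1 z) e mxE.
have hT : forall i j, T i j = c.
  move=> i j; rewrite (ord1 i) (ord1 j).
  have := hw 0; rewrite big_ord1 => e.
  have := congr1 (fun x => (w 0 0)^-1 *: x) e.
  by rewrite !scalerA mulVf // !scale1r.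
have hD0 : D = 0.
  apply/matrixP => i j; rewrite (ord1 i) (ord1 j) mxE.
  have := congr1 (fun A : 'M[F]_1 => A 0 0) HD; rewrite !mxE big_ord1.
  by move/eqP; rewrite mulf_eq0 orbb => /eqP.
have key : forall c' : O F, c = c' ->
    rep_iso (Rep D T) (@Rep F 1 0 (fun _ _ => c')).
  move=> c' <-; exists 1%:M, 1%:M; split => /=.
  - exact: mulmx1.
  - exact: mulmx1.
  - by rewrite hD0 mulmx0 mul0mx.
  - move=> i j; rewrite !big_ord1 (ord1 i) (ord1 j) hT !mxE.
    by rewrite eqxx scale1r.
by case: hc => e; [left | right]; apply: key.
Qed.

Theorem mainTheorem17 (k : closedFieldType) (char2 : (2 \in [pchar k])%R) :
  [/\ irreducible (triv_rep k), irreducible (Lxi_rep k),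
      ~ rep_iso (triv_rep k) (Lxi_rep k) &
      forall R : rep k, irreducible R ->
        rep_iso R (triv_rep k) \/ rep_iso R (Lxi_rep k)].
Proof.
split.
- exact: irr_const (Delta10 _) erefl.
- exact: irr_const (Delta11 _) erefl.
- exact: not_iso.
- exact: classify.
Qed.
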